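(* Let $n\ge2$ and let $F:\mathbf{R}^n\to\mathbf{R}$ be an integrand. Then $\mathcal{D}(F)(v)=\|v\|_F$ for every $v\in\mathbf{R}^n$.
   Context: $\mathbb{S}^{n-1}$ is the unit sphere. An integrand is a lower semicontinuous $F:\mathbf{R}^n\to\mathbf{R}$ with $F(\lambda x)=\lambda F(x)$ for $\lambda\ge0$ and $F>0$ on $\mathbb{S}^{n-1}$. $K_F:=\bigcap_{v\in\mathbb{S}^{n-1}}\{z:\langle z,v\rangle\le F(v)\}$; $\mathfrak{P}\Omega:=\{z:\langle z,x\rangle\le1\ \forall x\in\Omega\}$; $\|z\|_F:=\min\{\lambda\ge0: z\in\lambda\,\mathfrak{P}K_F\}$. $\mathcal{W}(F)(v):=\inf_{w\in\mathbb{S}^{n-1},\langle v,w\rangle>0}F(w)/\langle v,w\rangle$, $\mathcal{A}(G)(v):=\sup_{w\in\mathbb{S}^{n-1}}G(w)\langle v,w\rangle$ for $v\in\mathbb{S}^{n-1}$, extended by 1-homogeneity; $\mathcal{D}(F):=\mathcal{A}(\mathcal{W}(F))$. *)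

(* Defs.v *)
From HB Require Import structures.
From mathcomp Require Import all_boot all_order all_algebra.
From mathcomp Require Import all_classical all_reals all_analysis.
Set Implicit Arguments. Unset Strict Implicit. Unset Printing Implicit Defensive.
Import Order.TTheory GRing.Theory Num.Theory.
Import numFieldNormedType.Exports.
Local Open Scope classical_set_scope.
Local Open Scope ring_scope.

Section Defs.
Context {R : realType} {n : nat}.
Local Notation V := 'rV[R]_n.

Definition dotp (x y : V) : R := \sum_(i < n) x ord0 i * y ord0 i.

Definition sphere : set V := [set w | dotp w w = 1].

Definition integrand (F : V -> R) : Prop :=
  [/\ lower_semicontinuous (fun x => (F x)%:E),
      (forall (lam : R) (x : V), 0 <= lam -> F (lam *: x) = lam * F x)
    & (forall v, sphere v -> 0 < F v)].

Definition KF (F : V -> R) : set V :=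
  [set z | forall v, sphere v -> dotp z v <= F v].

Definition polar (Om : set V) : set V :=
  [set z | forall x, Om x -> dotp z x <= 1].

Definition scale_set (lam : R) (A : set V) : set V := [set lam *: a | a in A].

(* ||z||_F := min {lam >= 0 : z in lam P K_F}  (stated as an infimum in \bar R;
   the minimum exists) *)
Definition normF (F : V -> R) (z : V) : \bar R :=
  ereal_inf [set (lam%:E) | lam in [set lam : R | 0 <= lam /\ scale_set lam (polar (KF F)) z]].

Definition enorm (v : V) : R := Num.sqrt (dotp v v).

Definition hom_ext (g : V -> \bar R) (v : V) : \bar R :=
  if v == 0 then 0%E else ((enorm v)%:E * g ((enorm v)^-1 *: v))%E.

Definition Wulff (F : V -> R) : V -> \bar R :=
  hom_ext (fun v => ereal_inf [set (F w / dotp v w)%:E |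
                                 w in [set w | sphere w /\ 0 < dotp v w]]).

Definition Aop (G : V -> \bar R) : V -> \bar R :=
  hom_ext (fun v => ereal_sup [set (G w * (dotp v w)%:E)%E | w in sphere]).

Definition Dop (F : V -> R) : V -> \bar R := Aop (Wulff F).

End Defs.

(* Main.v *)
Require Import Defs.
From HB Require Import structures.
From mathcomp Require Import all_boot all_order all_algebra.
From mathcomp Require Import all_classical all_reals all_analysis.
Import Order.TTheory GRing.Theory Num.Theory.
Local Open Scope ring_scope.

Section Helpers.
Context {R : realType} {n : nat}.
Local Notation V := 'rV[R]_n.
Local Open Scope classical_set_scope.

Lemma dotpC (x y : V) : dotp x y = dotp y x.
Proof. by rewrite /dotp; apply: eq_bigr => i _; rewrite mulrC. Qed.

Lemma dotpZl (a : R) (x y : V) : dotp (a *: x) y = a * dotp x y.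
Proof. by rewrite /dotp mulr_sumr; apply: eq_bigr => i _; rewrite mxE mulrA. Qed.

Lemma dotpZr (a : R) (x y : V) : dotp x (a *: y) = a * dotp x y.
Proof. by rewrite dotpC dotpZl dotpC. Qed.

Lemma dotp0l (y : V) : dotp 0 y = 0.
Proof. by rewrite /dotp big1 // => i _; rewrite mxE mul0r. Qed.

Lemma dotp0r (y : V) : dotp y 0 = 0.
Proof. by rewrite dotpC dotp0l. Qed.

Lemma dotp_ge0 (x : V) : 0 <= dotp x x.
Proof. by rewrite /dotp sumr_ge0 // => i _; rewrite -expr2 sqr_ge0. Qed.

Lemma dotp_eq0 (x : V) : dotp x x = 0 -> x = 0.
Proof.
move=> h; apply/rowP => i; rewrite mxE.
have := @psumr_eq0P R _ xpredT (fun i => x ord0 i * x ord0 i).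
move=> /(_ (fun i _ => ltac:(rewrite -expr2 sqr_ge0 //))) /(_ h i isT).
by move/eqP; rewrite mulf_eq0 orbb => /eqP.
Qed.

Lemma sphere_neq0 {w : V} : sphere w -> w != 0.
Proof. by move=> sw; apply/eqP => w0; move: sw; rewrite /sphere /= w0 dotp0l => /eqP; rewrite eq_sym oner_eq0. Qed.

Lemma enorm_sphere (w : V) : sphere w -> enorm w = 1.
Proof. by rewrite /sphere /enorm /= => ->; rewrite sqrtr1. Qed.

Lemma enorm_gt0 {v : V} : v != 0 -> 0 < enorm v.
Proof.
move=> v0; rewrite /enorm sqrtr_gt0 lt_def dotp_ge0 andbT.
by apply/eqP => /dotp_eq0 /eqP; rewrite (negbTE v0).
Qed.

Lemma enorm_sq (v : V) : enorm v * enorm v = dotp v v.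
Proof. by rewrite /enorm -expr2 sqr_sqrtr // dotp_ge0. Qed.

Lemma normalize_sphere {v : V} : v != 0 -> sphere ((enorm v)^-1 *: v).
Proof.
move=> v0; have e0 := enorm_gt0 v0.
rewrite /sphere /= dotpZl dotpZr -enorm_sq.
set e := enorm v; have ne : e != 0 by rewrite gt_eqF.
by rewrite (mulrA e^-1 e e) mulVf // mul1r mulVf.
Qed.

Lemma normalizeK {v : V} : v != 0 -> enorm v *: ((enorm v)^-1 *: v) = v.
Proof. by move=> v0; rewrite scalerA mulfV ?scale1r // gt_eqF // enorm_gt0. Qed.

Variable F : V -> R.
Hypothesis Fpos : forall v, sphere v -> 0 < F v.

Definition rho (w : V) : \bar R := ereal_inf [set (F u / dotp w u)%:E |
                                 u in [set u | sphere u /\ 0 < dotp w u]].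

Lemma Wulff_rho (w : V) : sphere w -> Wulff F w = rho w.
Proof.
move=> sw; rewrite /Wulff /hom_ext (negbTE (sphere_neq0 sw)) enorm_sphere //.
by rewrite invr1 scale1r mul1e.
Qed.

Lemma rho_ge0 (w : V) : (0 <= rho w)%E.
Proof.
apply/ereal_infP => _ [u [su du] <-]; rewrite lee_fin.
by rewrite divr_ge0 // ltW // Fpos.
Qed.

Lemma rho_leF {w : V} : sphere w -> (rho w <= (F w)%:E)%E.
Proof.
move=> sw; apply: ereal_inf_lbound; exists w; last by rewrite sw divr1.
by split => //; rewrite sw ltr01.
Qed.

Lemma rho_real {w : V} : sphere w -> exists r, rho w = r%:E /\ 0 <= r.
Proof.
move=> sw; have := rho_ge0 w; have := rho_leF sw.
by case: (rho w) => [r _ r0| //| //]; exists r; split => //; rewrite -lee_fin.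
Qed.

Lemma rhoK (w : V) r : sphere w -> rho w = r%:E -> 0 <= r -> KF F (r *: w).
Proof.
move=> sw rw r0 u su; rewrite dotpZl.
have [du|du] := ltP 0 (dotp w u).
  have : (rho w <= (F u / dotp w u)%:E)%E.
    by apply: ereal_inf_lbound; exists u.
  by rewrite rw lee_fin ler_pdivlMr.
have hF := ltW (Fpos _ su); apply: le_trans hF; by rewrite mulr_ge0_le0.
Qed.

Lemma rho_lb (z : V) : KF F z -> z != 0 ->
  ((enorm z)%:E <= rho ((enorm z)^-1 *: z))%E.
Proof.
move=> Kz z0; apply/ereal_infP => _ [u [su du] <-]; rewrite lee_fin.
by rewrite ler_pdivlMr // -dotpZl normalizeK // Kz.
Qed.

Definition H (v : V) : \bar R := ereal_sup [set (dotp v z)%:E | z in KF F].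

Lemma KF0 : KF F 0.
Proof. by move=> u su; rewrite dotp0l ltW // Fpos. Qed.

Lemma H_ge0 v : (0 <= H v)%E.
Proof. by apply: ereal_sup_ubound; exists 0; [exact: KF0 | rewrite dotp0r]. Qed.

Lemma supA (v : V) : sphere v ->
  ereal_sup [set (Wulff F w * (dotp v w)%:E)%E | w in sphere] = H v.
Proof.
move=> sv; apply/le_anti/andP; split.
  apply/ereal_supP => _ [w sw <-]; rewrite Wulff_rho //.
  have [r [rw r0]] := rho_real sw; rewrite rw -EFinM.
  apply: ereal_sup_ubound; exists (r *: w); first exact: rhoK.
  by rewrite dotpZr.
apply/ereal_supP => _ [z Kz <-].
have base : (0 <= ereal_sup [set (Wulff F w * (dotp v w)%:E)%E | w in sphere])%E.
  apply: le_ereal_sup_tmp; exists (Wulff F v * (dotp v v)%:E)%E; first by exists v.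
  by rewrite Wulff_rho // sv mule1 rho_ge0.
have [->|z0] := eqVneq z 0; first by rewrite dotp0r.
set w := (enorm z)^-1 *: z.
have sw : sphere w := normalize_sphere z0.
have [d0|d0] := leP 0 (dotp v w).
  apply: le_ereal_sup_tmp; exists (Wulff F w * (dotp v w)%:E)%E; first by exists w.
  rewrite Wulff_rho // -(normalizeK z0) dotpZr EFinM.
  by apply: lee_wpmul2r; [rewrite lee_fin | exact: rho_lb].
apply: (@le_trans _ _ _ _ _ _ base); rewrite lee_fin -(normalizeK z0) dotpZr.
by rewrite pmulr_rle0 ?(ltW d0) // enorm_gt0.
Qed.

Lemma Dop_eq (v : V) : v != 0 ->
  Dop F v = ((enorm v)%:E * H ((enorm v)^-1 *: v))%E.
Proof.
move=> v0; rewrite /Dop /Aop /hom_ext (negbTE v0) supA //.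
exact: normalize_sphere.
Qed.

Lemma normF_eq (v : V) : v != 0 ->
  normF F v = ((enorm v)%:E * H ((enorm v)^-1 *: v))%E.
Proof.
move=> v0; have e0 := enorm_gt0 v0; set v' := (enorm v)^-1 *: v.
apply/le_anti/andP; split; last first.
  apply/ereal_infP => _ [lam [lam0 [a Ka av]] <-].
  have lam0' : 0 < lam.
    rewrite lt_def lam0 andbT; apply/eqP => l0; move: av; rewrite l0 scale0r.
    by move=> /esym/eqP; rewrite (negbTE v0).
  rewrite -lee_pdivlMl // -EFinM; apply/ereal_supP => _ [z Kz <-].
  have hz : dotp v z <= lam.
    rewrite -av dotpZl -[X in _ <= X]mulr1; apply: ler_wpM2l => //; exact: Ka.
  rewrite lee_fin /v' dotpZl; apply: ler_wpM2l => //.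
  by rewrite invr_ge0 ltW.
have := H_ge0 v'; case Hv: (H v') => [h| |] // h0.
  apply/lee_addgt0Pr => eps eps0; rewrite -EFinM -EFinD.
  have hge : 0 <= h by rewrite -lee_fin.
  set lam := enorm v * h + eps.
  have lam0 : 0 < lam by rewrite /lam ltr_wpDl // mulr_ge0 // ltW.
  apply: ereal_inf_lbound; exists lam => //; split; first exact: ltW.
  exists (lam^-1 *: v); last by rewrite scalerA mulfV ?scale1r // gt_eqF.
  move=> x Kx; rewrite dotpZl -(normalizeK v0) dotpZl -/v' mulrC ler_pdivrMr // mul1r.
  apply: le_trans (_ : enorm v * h <= lam); last by rewrite /lam lerDl ltW.
  apply: ler_wpM2l; first exact: ltW.
  rewrite -lee_fin -Hv.
  by apply: ereal_sup_ubound; exists x.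
by rewrite gt0_muley ?lee_fin ?leey.
Qed.

End Helpers.

Theorem corollary3p2 (R : realType) (n : nat) (F : 'rV[R]_n -> R) :
  (2 <= n)%N -> integrand F ->
  forall v : 'rV[R]_n, Dop F v = normF F v.
Proof.
move=> _ [_ _ Fpos] v.
have [->|v0] := eqVneq v 0; last by rewrite Dop_eq // normF_eq.
rewrite /Dop /Aop /hom_ext eqxx; apply/esym/le_anti/andP; split.
  apply: ereal_inf_lbound; exists 0%R => //; split => //.
  by exists 0; [move=> x _; rewrite dotp0l ler01 | rewrite scale0r].
by apply/ereal_infP => _ [lam [lam0 _] <-]; rewrite lee_fin.
Qed.
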